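(* Let $k$ be a field of characteristic zero, $n\ge1$, $S=k[x_1,\ldots,x_n]$, and $(S,L)$ a triangularizable Lie–Rinehart algebra with enveloping algebra $U$. Then the inclusion $S\subseteq U$ induces an isomorphism $H^0(S,U)\cong S$; that is, $H^0(S,U)=\{u\in U:[u,s]=0\text{ for all }s\in S\}$ equals $S$.
   Context: Triangularizable: $L\subseteq\operatorname{Der}(S)$ is an $S$-submodule and Lie subalgebra which is a free $S$-module with basis of derivations $\alpha_1,\ldots,\alpha_n$ such that $\alpha_i(x_j)=0$ for $i>j$ and $\alpha_1(x_1)\cdots\alpha_n(x_n)\ne0$. $U$ is the universal enveloping algebra of $(S,L)$ (containing $S$ as a subalgebra). $H^\bullet(S,U)=\operatorname{Ext}^\bullet_{S\otimes S}(S,U)$ is the Hochschild cohomology of $S$ with values in the $S$-bimodule $U$; in degree zero it is the centralizer of $S$ in $U$. *)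

(* Defs.v *)
From HB Require Import structures.
From mathcomp Require Import all_boot all_order all_algebra.
From mathcomp Require Import mpoly.
Set Implicit Arguments. Unset Strict Implicit. Unset Printing Implicit Defensive.
Import GRing.Theory.
Local Open Scope ring_scope.

(* S = k[x_1,...,x_n] is {mpoly k[n]}; variable x_(j+1) is 'X_j, j : 'I_n. *)
(* k-linear endomorphisms of S are represented as plain functions S -> S.  *)

Section LR.
Variables (k : fieldType) (n : nat).
Local Notation S := {mpoly k[n]}.

Definition is_derivation (D : S -> S) : Prop :=
  (forall (c : k) (p q : S), D (c *: p + q) = c *: D p + D q) /\
  (forall p q : S, D (p * q) = D p * q + p * D q).

Definition smul_op (s : S) (D : S -> S) : S -> S := fun p => s * D p.
Definition add_op (D E : S -> S) : S -> S := fun p => D p + E p.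
Definition bracket_op (D E : S -> S) : S -> S := fun p => D (E p) - E (D p).

Record triangularizable (L : (S -> S) -> Prop) (alpha : 'I_n -> (S -> S)) : Prop := {
  tri_der : forall D, L D -> is_derivation D;
  tri_add : forall D E, L D -> L E -> L (add_op D E);
  tri_smul : forall s D, L D -> L (smul_op s D);
  tri_bracket : forall D E, L D -> L E -> L (bracket_op D E);
  tri_basis_in : forall i, L (alpha i);
  tri_span : forall D, L D ->
     exists c : 'I_n -> S, D = (fun p => \sum_(i < n) c i * alpha i p);
  tri_free : forall c : 'I_n -> S,
     (fun p => \sum_(i < n) c i * alpha i p) = (fun _ => 0) -> forall i, c i = 0;
  tri_triang : forall i j : 'I_n, (j < i)%N -> alpha i 'X_j = 0;
  tri_nonzero : \prod_(i < n) alpha i 'X_i != 0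
}.

Definition is_kalg_morph (A B : algType k) (f : A -> B) : Prop :=
  [/\ f 1 = 1, (forall x y, f (x * y) = f x * f y),
      (forall x y, f (x + y) = f x + f y) & (forall (c : k) x, f (c *: x) = c *: f x)].

(* (phi, psi) : (S, L) -> A satisfies the defining relations of the
   enveloping algebra of the Lie-Rinehart algebra (S, L). *)
Definition LR_rep (L : (S -> S) -> Prop) (A : algType k)
    (phi : S -> A) (psi : (S -> S) -> A) : Prop :=
  [/\ is_kalg_morph phi,
      (forall D E, L D -> L E -> psi (add_op D E) = psi D + psi E),
      (forall s D, L D -> psi (smul_op s D) = phi s * psi D),
      (forall D E, L D -> L E -> psi (bracket_op D E) = psi D * psi E - psi E * psi D)
    & (forall s D, L D -> psi D * phi s - phi s * psi D = phi (D s))].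

Definition is_enveloping_algebra (L : (S -> S) -> Prop) (U : algType k)
    (iS : S -> U) (iL : (S -> S) -> U) : Prop :=
  LR_rep L iS iL /\
  forall (A : algType k) (phi : S -> A) (psi : (S -> S) -> A),
    LR_rep L phi psi ->
    exists f : U -> A,
      [/\ is_kalg_morph f, (forall s, f (iS s) = phi s),
          (forall D, L D -> f (iL D) = psi D)
        & (forall g : U -> A, is_kalg_morph g -> (forall s, g (iS s) = phi s) ->
             (forall D, L D -> g (iL D) = psi D) -> forall u, g u = f u)].

End LR.

(* Main.v *)
Require Import Defs.
From HB Require Import structures.
From mathcomp Require Import all_boot all_order all_algebra.
From mathcomp Require Import mpoly.
From mathcomp Require Import boolp.
From Stdlib Require Import ProofIrrelevance.
Set Implicit Arguments. Unset Strict Implicit. Unset Printing Implicit Defensive.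
Import GRing.Theory.
Local Open Scope ring_scope.


Definition linP (k : fieldType) (V : lalgType k) (f : V -> V) :=
  forall (c : k) p q, f (c *: p + q) = c *: f p + f q.

Record lend (k : fieldType) (V : lalgType k) := LEnd { lfun :> V -> V; lfunP : linP lfun }.

Section LendS.
Variables (k : fieldType) (V : lalgType k).
Local Notation E := (lend V).
Lemma lend_ext (f g : E) : (forall x, f x = g x) -> f = g.
Proof.
case: f g => f fP [g gP] /= H.
have eq : f = g by apply: functional_extensionality_dep.
subst g. by rewrite (proof_irrelevance _ fP gP).
Qed.
Lemma linP0 (f : E) : f 0 = 0.
Proof. have H := lfunP f 1 0 0. rewrite scale1r addr0 scale1r in H.
by apply: (addrI (f 0)); rewrite addr0 -H. Qed.
Lemma linPD (f : E) x y : f (x + y) = f x + f y.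
Proof. have := lfunP f 1 x y. by rewrite !scale1r. Qed.
Lemma linPZ (f : E) c x : f (c *: x) = c *: f x.
Proof. have := lfunP f c x 0. by rewrite !addr0 linP0 addr0. Qed.
Lemma linPN (f : E) x : f (- x) = - f x.
Proof. by rewrite -scaleN1r linPZ scaleN1r. Qed.

Definition lzero : E := @LEnd _ _ (fun _ => 0) (fun c p q => ltac:(by rewrite scaler0 addr0)).
Definition lopp (f : E) : E := @LEnd _ _ (fun x => - f x)
  (fun c p q => ltac:(by rewrite /= (lfunP f) opprD scalerN)).
Definition ladd (f g : E) : E := @LEnd _ _ (fun x => f x + g x)
  (fun c p q => ltac:(by rewrite /= (lfunP f) (lfunP g) scalerDr addrACA)).
Definition lone : E := @LEnd _ _ id (fun c p q => erefl).
Definition lmul (f g : E) : E := @LEnd _ _ (fun x => f (g x))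
  (fun c p q => ltac:(by rewrite /= (lfunP g) (lfunP f))).
Definition lscale (c : k) (f : E) : E := @LEnd _ _ (fun x => c *: f x)
  (fun a p q => ltac:(by rewrite /= (lfunP f) scalerDr !scalerA mulrC)).
End LendS.

HB.instance Definition _ (k : fieldType) (V : lalgType k) := gen_eqMixin (@lend k V).
HB.instance Definition _ (k : fieldType) (V : lalgType k) := gen_choiceMixin (@lend k V).
Section LendI.
Variables (k : fieldType) (V : lalgType k).
Local Notation E := (lend V).
Lemma laddA : associative (@ladd k V). Proof. by move=> f g h; apply: lend_ext => x /=; rewrite addrA. Qed.
Lemma laddC : commutative (@ladd k V). Proof. by move=> f g; apply: lend_ext => x /=; rewrite addrC. Qed.
Lemma ladd0 : left_id (@lzero k V) (@ladd k V). Proof. by move=> f; apply: lend_ext => x /=; rewrite add0r. Qed.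
Lemma laddN : left_inverse (@lzero k V) (@lopp k V) (@ladd k V). Proof. by move=> f; apply: lend_ext => x /=; rewrite addNr. Qed.
End LendI.
HB.instance Definition _ (k : fieldType) (V : lalgType k) := GRing.isZmodule.Build (@lend k V) (@laddA k V) (@laddC k V) (@ladd0 k V) (@laddN k V).
Section LendR.
Variables (k : fieldType) (V : lalgType k).
Local Notation E := (lend V).
Lemma lmulA : associative (@lmul k V). Proof. by move=> f g h; apply: lend_ext. Qed.
Lemma lmul1 : left_id (@lone k V) (@lmul k V). Proof. by move=> f; apply: lend_ext. Qed.
Lemma lmulr1 : right_id (@lone k V) (@lmul k V). Proof. by move=> f; apply: lend_ext. Qed.
Lemma lmulDl : left_distributive (@lmul k V) +%R. Proof. by move=> f g h; apply: lend_ext. Qed.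
Lemma lmulDr : right_distributive (@lmul k V) +%R.
Proof. by move=> f g h; apply: lend_ext => x /=; rewrite linPD. Qed.
Lemma lone_neq0 : (@lone k V) != 0.
Proof. apply/eqP => H. have := congr1 (fun f : E => lfun f 1) H => /= /eqP. by rewrite oner_eq0. Qed.
End LendR.
HB.instance Definition _ (k : fieldType) (V : lalgType k) := GRing.Zmodule_isNzRing.Build (@lend k V) (@lmulA k V) (@lmul1 k V) (@lmulr1 k V) (@lmulDl k V) (@lmulDr k V) (@lone_neq0 k V).
Section LendM.
Variables (k : fieldType) (V : lalgType k).
Local Notation E := (lend V).
Lemma lscaleA a b (f : E) : lscale a (lscale b f) = lscale (a * b) f.
Proof. by apply: lend_ext => x /=; rewrite scalerA. Qed.
Lemma lscale1 : left_id 1 (@lscale k V). Proof. by move=> f; apply: lend_ext => x /=; rewrite scale1r. Qed.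
Lemma lscaleDr : right_distributive (@lscale k V) +%R.
Proof. by move=> a f g; apply: lend_ext => x /=; rewrite scalerDr. Qed.
Lemma lscaleDl (f : E) : {morph (@lscale k V)^~ f : a b / a + b}.
Proof. by move=> a b; apply: lend_ext => x /=; rewrite scalerDl. Qed.
End LendM.
HB.instance Definition _ (k : fieldType) (V : lalgType k) := GRing.Zmodule_isLmodule.Build k (@lend k V) (@lscaleA k V) (@lscale1 k V) (@lscaleDr k V) (@lscaleDl k V).
Section LendA.
Variables (k : fieldType) (V : lalgType k).
Local Notation E := (lend V).
Lemma lscaleAl (a : k) (f g : E) : a *: (f * g) = (a *: f) * g.
Proof. by apply: lend_ext. Qed.
Lemma lscaleAr (a : k) (f g : E) : a *: (f * g) = f * (a *: g).
Proof. by apply: lend_ext => x /=; rewrite linPZ. Qed.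
End LendA.
HB.instance Definition _ (k : fieldType) (V : lalgType k) := GRing.Lmodule_isLalgebra.Build k (@lend k V) (@lscaleAl k V).
HB.instance Definition _ (k : fieldType) (V : lalgType k) := GRing.Lalgebra_isAlgebra.Build k (@lend k V) (@lscaleAr k V).


Record subclosed (k : fieldType) (U : algType k) (P : U -> Prop) : Prop := {
  sc0 : P 0; sc1 : P 1; scD : forall x y, P x -> P y -> P (x + y);
  scN : forall x, P x -> P (- x); scM : forall x y, P x -> P y -> P (x * y);
  scZ : forall (c : k) x, P x -> P (c *: x) }.

Record subT (k : fieldType) (U : algType k) (P : U -> Prop) (h : subclosed P) :=
  SubT { bval :> U; bvalP : P bval }.

Section SubS.
Variables (k : fieldType) (U : algType k) (P : U -> Prop) (h : subclosed P).
Local Notation B := (subT h).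
Lemma sub_ext (x y : B) : bval x = bval y -> x = y.
Proof. case: x y => x xP [y yP] /= eq; subst y. by rewrite (proof_irrelevance _ xP yP). Qed.
Definition szero : B := SubT h (sc0 h).
Definition sone : B := SubT h (sc1 h).
Definition sadd (x y : B) : B := SubT h (scD h (bvalP x) (bvalP y)).
Definition sopp (x : B) : B := SubT h (scN h (bvalP x)).
Definition smul (x y : B) : B := SubT h (scM h (bvalP x) (bvalP y)).
Definition sscale (c : k) (x : B) : B := SubT h (scZ h c (bvalP x)).
End SubS.
HB.instance Definition _ (k : fieldType) (U : algType k) (P : U -> Prop) (h : subclosed P) := gen_eqMixin (subT h).
HB.instance Definition _ (k : fieldType) (U : algType k) (P : U -> Prop) (h : subclosed P) := gen_choiceMixin (subT h).
Section SubI.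
Variables (k : fieldType) (U : algType k) (P : U -> Prop) (h : subclosed P).
Local Notation B := (subT h).
Lemma saddA : associative (@sadd k U P h). Proof. by move=> *; apply: sub_ext; rewrite /= addrA. Qed.
Lemma saddC : commutative (@sadd k U P h). Proof. by move=> *; apply: sub_ext; rewrite /= addrC. Qed.
Lemma sadd0 : left_id (szero h) (@sadd k U P h). Proof. by move=> *; apply: sub_ext; rewrite /= add0r. Qed.
Lemma saddN : left_inverse (szero h) (@sopp k U P h) (@sadd k U P h). Proof. by move=> *; apply: sub_ext; rewrite /= addNr. Qed.
End SubI.
HB.instance Definition _ (k : fieldType) (U : algType k) (P : U -> Prop) (h : subclosed P) :=
  GRing.isZmodule.Build (subT h) (@saddA k U P h) (@saddC k U P h) (@sadd0 k U P h) (@saddN k U P h).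
Section SubR.
Variables (k : fieldType) (U : algType k) (P : U -> Prop) (h : subclosed P).
Local Notation B := (subT h).
Lemma smulA : associative (@smul k U P h). Proof. by move=> *; apply: sub_ext; rewrite /= mulrA. Qed.
Lemma smul1 : left_id (sone h) (@smul k U P h). Proof. by move=> *; apply: sub_ext; rewrite /= mul1r. Qed.
Lemma smulr1 : right_id (sone h) (@smul k U P h). Proof. by move=> *; apply: sub_ext; rewrite /= mulr1. Qed.
Lemma smulDl : left_distributive (@smul k U P h) +%R. Proof. by move=> *; apply: sub_ext; rewrite /= mulrDl. Qed.
Lemma smulDr : right_distributive (@smul k U P h) +%R. Proof. by move=> *; apply: sub_ext; rewrite /= mulrDr. Qed.
Lemma sone_neq0 : (sone h) != 0.
Proof. apply/negP => /eqP H. have H1 : (1 : U) = 0 := congr1 (@bval _ _ _ h) H. by move: (oner_neq0 U); rewrite H1 eqxx. Qed.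
End SubR.
HB.instance Definition _ (k : fieldType) (U : algType k) (P : U -> Prop) (h : subclosed P) :=
  GRing.Zmodule_isNzRing.Build (subT h) (@smulA k U P h) (@smul1 k U P h) (@smulr1 k U P h) (@smulDl k U P h) (@smulDr k U P h) (@sone_neq0 k U P h).
Section SubM.
Variables (k : fieldType) (U : algType k) (P : U -> Prop) (h : subclosed P).
Local Notation B := (subT h).
Lemma sscaleA a b (x : B) : sscale a (sscale b x) = sscale (a * b) x.
Proof. by apply: sub_ext; rewrite /= scalerA. Qed.
Lemma sscale1 : left_id 1 (@sscale k U P h). Proof. by move=> *; apply: sub_ext; rewrite /= scale1r. Qed.
Lemma sscaleDr : right_distributive (@sscale k U P h) +%R.
Proof. by move=> *; apply: sub_ext; rewrite /= scalerDr. Qed.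
Lemma sscaleDl (x : B) : {morph (@sscale k U P h)^~ x : a b / a + b}.
Proof. by move=> *; apply: sub_ext; rewrite /= scalerDl. Qed.
End SubM.
HB.instance Definition _ (k : fieldType) (U : algType k) (P : U -> Prop) (h : subclosed P) :=
  GRing.Zmodule_isLmodule.Build k (subT h) (@sscaleA k U P h) (@sscale1 k U P h) (@sscaleDr k U P h) (@sscaleDl k U P h).
Section SubA.
Variables (k : fieldType) (U : algType k) (P : U -> Prop) (h : subclosed P).
Local Notation B := (subT h).
Lemma sscaleAl (a : k) (x y : B) : a *: (x * y) = (a *: x) * y.
Proof. by apply: sub_ext; rewrite /= scalerAl. Qed.
Lemma sscaleAr (a : k) (x y : B) : a *: (x * y) = x * (a *: y).
Proof. by apply: sub_ext; rewrite /= scalerAr. Qed.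
End SubA.
HB.instance Definition _ (k : fieldType) (U : algType k) (P : U -> Prop) (h : subclosed P) :=
  GRing.Lmodule_isLalgebra.Build k (subT h) (@sscaleAl k U P h).
HB.instance Definition _ (k : fieldType) (U : algType k) (P : U -> Prop) (h : subclosed P) :=
  GRing.Lalgebra_isAlgebra.Build k (subT h) (@sscaleAr k U P h).


Section Main.
Variables (k : fieldType) (n : nat).
Local Notation S := {mpoly k[n]}.
Variables (L : (S -> S) -> Prop) (alpha : 'I_n -> S -> S).
Hypothesis Htri : triangularizable L alpha.
Hypothesis Hn : (0 < n)%N.
Hypothesis Hchar : [pchar k] =i pred0.
Variables (U : algType k) (iS : S -> U) (iL : (S -> S) -> U).
Hypothesis HU : is_enveloping_algebra L iS iL.

Lemma HUrep : LR_rep L iS iL. Proof. by case: HU. Qed.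
Lemma iS1 : iS 1 = 1. Proof. by case: HUrep => -[]. Qed.
Lemma iSM x y : iS (x * y) = iS x * iS y. Proof. by case: HUrep => -[]. Qed.
Lemma iSD x y : iS (x + y) = iS x + iS y. Proof. by case: HUrep => -[]. Qed.
Lemma iSZ (c : k) x : iS (c *: x) = c *: iS x. Proof. by case: HUrep => -[]. Qed.
Lemma iS0 : iS 0 = 0.
Proof. by apply: (addrI (iS 0)); rewrite -iSD !addr0. Qed.
Lemma iSN x : iS (- x) = - iS x.
Proof. apply: (addrI (iS x)). rewrite -iSD subrr iS0 subrr. done. Qed.
Lemma iSB x y : iS (x - y) = iS x - iS y. Proof. by rewrite iSD iSN. Qed.
Lemma iS_sum I (r : seq I) (P : pred I) (F : I -> S) :
  iS (\sum_(i <- r | P i) F i) = \sum_(i <- r | P i) iS (F i).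
Proof. exact: (big_morph iS iSD iS0). Qed.
Lemma iScomm x y : iS x * iS y = iS y * iS x. Proof. by rewrite -!iSM mulrC. Qed.
Lemma iLadd D E : L D -> L E -> iL (add_op D E) = iL D + iL E. Proof. by case: HUrep => _ h _ _ _; apply: h. Qed.
Lemma iLsmul s D : L D -> iL (smul_op s D) = iS s * iL D. Proof. by case: HUrep => _ _ h _ _; apply: h. Qed.
Lemma iLbr D E : L D -> L E -> iL (bracket_op D E) = iL D * iL E - iL E * iL D.
Proof. by case: HUrep => _ _ _ h _; apply: h. Qed.
Lemma iLcomm s D : L D -> iL D * iS s - iS s * iL D = iS (D s). Proof. by case: HUrep => _ _ _ _ h; apply: h. Qed.

(* ---------- injectivity via the representation on S ---------- *)
Lemma mullin (s : S) : linP (fun p : S => s * p).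
Proof. by move=> c p q; rewrite mulrDr scalerAr. Qed.
Definition phiE (s : S) : lend S := LEnd (mullin s).
Lemma derlin D : L D -> linP D.
Proof. by move=> /(tri_der Htri) [h _]. Qed.
Definition psiE (D : S -> S) : lend S :=
  match pselect (L D) with left h => LEnd (derlin h) | right _ => 0 end.
Lemma psiEL D : L D -> lfun (psiE D) = D.
Proof. by rewrite /psiE => h; case: pselect. Qed.

Lemma LRE : LR_rep L phiE psiE.
Proof.
split.
- split.
  + by apply: lend_ext => x /=; rewrite mul1r.
  + by move=> x y; apply: lend_ext => p /=; rewrite mulrA.
  + by move=> x y; apply: lend_ext => p /=; rewrite mulrDl.
  + by move=> c x; apply: lend_ext => p /=; rewrite scalerAl.
- move=> D E hD hE; apply: lend_ext => p /=.
  by rewrite !psiEL //; apply: (tri_add Htri).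
- move=> s D hD; apply: lend_ext => p /=.
  by rewrite !psiEL //; apply: (tri_smul Htri).
- move=> D E hD hE; apply: lend_ext => p /=.
  by rewrite !psiEL //; apply: (tri_bracket Htri).
- move=> s D hD; apply: lend_ext => p /=.
  rewrite !psiEL //. have [_ hder] := tri_der Htri hD.
  by rewrite hder addrK.
Qed.

Lemma iS_inj : injective iS.
Proof.
case: HU => _ /(_ _ _ _ LRE) [f [_ hf _ _]].
move=> x y /(congr1 f); rewrite !hf => /(congr1 (fun g : lend S => lfun g 1)) /=.
by rewrite !mulr1.
Qed.


(* ---------- filtration ---------- *)
Inductive G : nat -> U -> Prop :=
| Gs (d : nat) (s : S) : G d (iS s)
| Gadd (d : nat) (x y : U) : G d x -> G d y -> G d (x + y)
| GmulS (d : nat) (s : S) (x : U) : G d x -> G d (iS s * x)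
| GmulL (d : nat) (D : S -> S) (x : U) : L D -> G d x -> G d.+1 (iL D * x)
| Gmono (d : nat) (x : U) : G d x -> G d.+1 x.

Lemma G_le a b x : (a <= b)%N -> G a x -> G b x.
Proof.
move=> /subnKC <-; elim: (b - a)%N => [|m IH] h; first by rewrite addn0.
by rewrite addnS; apply: Gmono; apply: IH.
Qed.
Lemma G0 d : G d 0. Proof. by rewrite -iS0; apply: Gs. Qed.
Lemma GN d x : G d x -> G d (- x).
Proof. by move=> h; rewrite -mulN1r -iS1 -iSN; apply: GmulS. Qed.
Lemma GB d x y : G d x -> G d y -> G d (x - y).
Proof. by move=> hx hy; apply: Gadd => //; apply: GN. Qed.
Lemma GZ d (c : k) x : G d x -> G d (c *: x).
Proof.
move=> h; have -> : c *: x = iS (c *: 1) * x by rewrite iSZ iS1 -scalerAl mul1r.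
exact: GmulS.
Qed.
Lemma GM a b x y : G a x -> G b y -> G (a + b) (x * y).
Proof.
move=> hx hy; elim: hx => {a x}.
- move=> d s; apply: G_le (leq_addl _ _) _; rewrite -[y]mul1r -iS1 mulrA -iSM.
  by apply: GmulS.
- by move=> d x1 x2 _ h1 _ h2; rewrite mulrDl; apply: Gadd.
- by move=> d s x _ h; rewrite -mulrA; apply: GmulS.
- by move=> d D x hD _ h; rewrite -mulrA addSn; apply: GmulL.
- by move=> d x _ h; rewrite addSn; apply: Gmono.
Qed.
Lemma G_sum d I (r : seq I) (P : pred I) (F : I -> U) :
  (forall i, P i -> G d (F i)) -> G d (\sum_(i <- r | P i) F i).
Proof.
move=> h; apply: (big_ind (G d)) => //; [exact: G0 | by move=> *; apply: Gadd].
Qed.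
Lemma G_iL D : L D -> G 1 (iL D).
Proof. by move=> hD; rewrite -[iL D]mulr1 -iS1; apply: GmulL => //; apply: Gs. Qed.
Lemma G_pow x m : G 1 x -> G m (x ^+ m).
Proof.
move=> h; elim: m => [|m IH]; first by rewrite expr0 -iS1; apply: Gs.
by rewrite exprS -add1n; apply: GM.
Qed.

Definition Gz d x := if d is d'.+1 then G d' x else x = 0.
Lemma Gz0 d : Gz d 0. Proof. by case: d => //= d; apply: G0. Qed.
Lemma GzD d x y : Gz d x -> Gz d y -> Gz d (x + y).
Proof. by case: d => [/= -> ->|d]; [rewrite addr0|apply: Gadd]. Qed.
Lemma GzN d x : Gz d x -> Gz d (- x).
Proof. by case: d => [/= ->|d]; [rewrite oppr0|apply: GN]. Qed.
Lemma GzB d x y : Gz d x -> Gz d y -> Gz d (x - y).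
Proof. by move=> hx hy; apply: GzD => //; apply: GzN. Qed.
Lemma GzS d s x : Gz d x -> Gz d (iS s * x).
Proof. by case: d => [/= ->|d]; [rewrite mulr0|apply: GmulS]. Qed.
Lemma GzLS d D x : L D -> Gz d x -> G d (iL D * x).
Proof. by case: d => [/= _ ->|d hD h]; [rewrite mulr0; apply: G0|apply: GmulL]. Qed.
Lemma Gz_le a b x : (a <= b)%N -> Gz a x -> Gz b x.
Proof.
case: a => [_ /= ->|a]; first exact: Gz0.
by case: b => // b hab /=; apply: G_le.
Qed.
Lemma Gz_sum d I (r : seq I) (P : pred I) (F : I -> U) :
  (forall i, P i -> Gz d (F i)) -> Gz d (\sum_(i <- r | P i) F i).
Proof.
move=> h; apply: (big_ind (Gz d)) => //; [exact: Gz0 | by move=> *; apply: GzD].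
Qed.
Lemma G0_iS x : G 0 x -> exists s, x = iS s.
Proof.
move Hd: 0%N => d h; elim: h Hd => //.
- by move=> ? s _; exists s.
- move=> ? x1 x2 _ h1 _ h2 hd; have [s1 ->] := h1 hd; have [s2 ->] := h2 hd.
  by exists (s1 + s2); rewrite iSD.
- move=> ? s x1 _ h hd; have [s1 ->] := h hd.
  by exists (s * s1); rewrite iSM.
Qed.

Definition ad (t : S) (x : U) := x * iS t - iS t * x.
Lemma adD t x y : ad t (x + y) = ad t x + ad t y.
Proof. by rewrite /ad mulrDl mulrDr opprD addrACA. Qed.
Lemma ad0 t : ad t 0 = 0. Proof. by rewrite /ad mul0r mulr0 subrr. Qed.
Lemma adN t x : ad t (- x) = - ad t x. Proof. by rewrite /ad mulNr mulrN opprB opprK addrC. Qed.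
Lemma adB t x y : ad t (x - y) = ad t x - ad t y. Proof. by rewrite adD adN. Qed.
Lemma ad_sum t I (r : seq I) (P : pred I) (F : I -> U) :
  ad t (\sum_(i <- r | P i) F i) = \sum_(i <- r | P i) ad t (F i).
Proof. exact: (big_morph (ad t) (adD t) (ad0 t)). Qed.
Lemma ad_iS t s : ad t (iS s) = 0. Proof. by rewrite /ad iScomm subrr. Qed.
Lemma adM t x y : ad t (x * y) = ad t x * y + x * ad t y.
Proof. by rewrite /ad !mulrBl !mulrBr !mulrA [X in _ = X]addrC addrA subrK. Qed.
Lemma ad_mulS t s x : ad t (iS s * x) = iS s * ad t x.
Proof. by rewrite adM ad_iS mul0r add0r. Qed.
Lemma ad_L t D : L D -> ad t (iL D) = iS (D t).
Proof. exact: iLcomm. Qed.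
Lemma ad_comm s t x : ad s (ad t x) = ad t (ad s x).
Proof.
have e1 : x * iS t * iS s = x * iS s * iS t by rewrite -!mulrA iScomm.
have e2 : iS s * iS t * x = iS t * iS s * x by rewrite iScomm.
rewrite /ad !mulrBl !mulrBr !mulrA e1 e2 !opprB addrACA [X in _ = X]addrACA.
by congr (_ + _); rewrite addrC.
Qed.

Lemma ad_lower t d x : G d x -> Gz d (ad t x).
Proof.
elim => {d x}.
- by move=> d s; rewrite ad_iS; apply: Gz0.
- by move=> d x y _ hx _ hy; rewrite adD; apply: GzD.
- by move=> d s x _ h; rewrite ad_mulS; apply: GzS.
- move=> d D x hD hx h /=; rewrite adM (ad_L _ hD); apply: Gadd.
    by apply: GmulS.
  by apply: GzLS.
- by move=> d x _ h; apply: Gz_le h.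
Qed.

Lemma iter_adD t m x y : iter m (ad t) (x + y) = iter m (ad t) x + iter m (ad t) y.
Proof. by elim: m => //= m ->; rewrite adD. Qed.
Lemma iter_ad0 t m : iter m (ad t) 0 = 0.
Proof. by elim: m => //= m ->; rewrite ad0. Qed.
Lemma iter_ad_sum t m I (r : seq I) (P : pred I) (F : I -> U) :
  iter m (ad t) (\sum_(i <- r | P i) F i) = \sum_(i <- r | P i) iter m (ad t) (F i).
Proof. exact: (big_morph (iter m (ad t)) (iter_adD t m) (iter_ad0 t m)). Qed.
Lemma iter_mulS t m s x : iter m (ad t) (iS s * x) = iS s * iter m (ad t) x.
Proof. by elim: m => //= m ->; rewrite ad_mulS. Qed.
Lemma iter_adz t m x y : ad t y = 0 -> iter m (ad t) (x * y) = iter m (ad t) x * y.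
Proof. by move=> hy; elim: m => //= m ->; rewrite adM hy mulr0 addr0. Qed.
Lemma iter_comm s t m x : ad s (iter m (ad t) x) = iter m (ad t) (ad s x).
Proof. by elim: m => //= m IH; rewrite ad_comm IH. Qed.
Lemma Gz_iter t m d x : Gz d x -> Gz (d - m) (iter m (ad t) x).
Proof.
elim: m => [|m IH] h; first by rewrite subn0.
rewrite iterS subnS; have := IH h; case: (d - m)%N => [/= ->|e /= h']; first by rewrite ad0.
exact: ad_lower.
Qed.
Lemma iter_kill t m d x : (d < m)%N -> G d x -> iter m (ad t) x = 0.
Proof.
move=> hm hx; have := @Gz_iter t m d.+1 x hx.
by rewrite (eqnP (_ : (d.+1 - m == 0)%N)) // subn_eq0.
Qed.

Definition Gall (u : U) := exists d, G d u.
Lemma Gall_closed : subclosed Gall.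
Proof.
split.
- by exists 0%N; apply: G0.
- by exists 0%N; rewrite -iS1; apply: Gs.
- move=> x y [a ha] [b hb]; exists (maxn a b); apply: Gadd.
    by apply: G_le ha; apply: leq_maxl.
  by apply: G_le hb; apply: leq_maxr.
- by move=> x [a ha]; exists a; apply: GN.
- by move=> x y [a ha] [b hb]; exists (a + b)%N; apply: GM.
- by move=> c x [a ha]; exists a; apply: GZ.
Qed.
Local Notation Bt := (subT Gall_closed).
Definition phiB (s : S) : Bt := SubT Gall_closed (ex_intro _ 0%N (Gs 0 s)).
Definition psiB (D : S -> S) : Bt :=
  match pselect (L D) with left h => SubT Gall_closed (ex_intro _ 1%N (G_iL h)) | right _ => 0 end.
Lemma psiBL D : L D -> bval (psiB D) = iL D.
Proof. by rewrite /psiB => h; case: pselect. Qed.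
Lemma bvalD (x y : Bt) : bval (x + y) = bval x + bval y. Proof. by []. Qed.
Lemma bvalN (x : Bt) : bval (- x) = - bval x. Proof. by []. Qed.
Lemma bvalM (x y : Bt) : bval (x * y) = bval x * bval y. Proof. by []. Qed.
Lemma bvalZ c (x : Bt) : bval (c *: x) = c *: bval x. Proof. by []. Qed.
Lemma bval1 : bval (1 : Bt) = 1. Proof. by []. Qed.
Lemma bvalB (x y : Bt) : bval (x - y) = bval x - bval y. Proof. by []. Qed.

Lemma LRB : LR_rep L phiB psiB.
Proof.
split.
- split.
  + by apply: sub_ext; rewrite bval1 /= iS1.
  + by move=> x y; apply: sub_ext; rewrite bvalM /= iSM.
  + by move=> x y; apply: sub_ext; rewrite bvalD /= iSD.
  + by move=> c x; apply: sub_ext; rewrite bvalZ /= iSZ.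
- move=> D E hD hE; apply: sub_ext.
  by rewrite bvalD !psiBL ?iLadd //; apply: (tri_add Htri).
- move=> s D hD; apply: sub_ext.
  by rewrite bvalM !psiBL ?iLsmul //; apply: (tri_smul Htri).
- move=> D E hD hE; apply: sub_ext.
  by rewrite bvalB !bvalM !psiBL ?iLbr //; apply: (tri_bracket Htri).
- move=> s D hD; apply: sub_ext.
  by rewrite bvalB !bvalM !psiBL //= iLcomm.
Qed.

Lemma spanning u : exists d, G d u.
Proof.
case: HU => rep univ.
have [fU [_ _ _ uniqU]] := univ _ _ _ rep.
have [fB [mB hBS hBL _]] := univ _ _ _ LRB.
have e1 := uniqU id.
have e2 := uniqU (fun x => bval (fB x)).
have h1 : u = fU u.
  refine (uniqU (fun x : U => x) _ _ _ u) => //; by split.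
have h2 : bval (fB u) = fU u.
  refine (uniqU (fun x => bval (fB x)) _ _ _ u).
  - case: mB => m1 mM mD mZ; split.
    + by rewrite m1.
    + by move=> x y; rewrite mM.
    + by move=> x y; rewrite mD.
    + by move=> c x; rewrite mZ.
  - by move=> s; rewrite hBS.
  - by move=> D hD; rewrite hBL // psiBL.
by have := bvalP (fB u); rewrite h2 -h1.
Qed.

Lemma LF D d y : L D -> G d y -> G d (iL D * y - y * iL D).
Proof.
move=> hD hy; elim: hy => {d y}.
- move=> d s; have := iLcomm s hD => ->; apply: G_le (leq0n d) _; exact: Gs.
- move=> d x y _ hx _ hy.
  have -> : iL D * (x + y) - (x + y) * iL D = (iL D * x - x * iL D) + (iL D * y - y * iL D).
    by rewrite mulrDr mulrDl opprD addrACA.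
  exact: Gadd.
- move=> d s x hx h.
  have -> : iL D * (iS s * x) - iS s * x * iL D = iS (D s) * x + iS s * (iL D * x - x * iL D).
    rewrite -(iLcomm s hD) mulrBl mulrBr !mulrA -!addrA; congr (_ + _).
    by rewrite addrA addNr add0r.
  apply: Gadd; last exact: GmulS.
  by apply: GmulS.
- move=> d E x hE hx h.
  have -> : iL D * (iL E * x) - iL E * x * iL D = iL (bracket_op D E) * x + iL E * (iL D * x - x * iL D).
    rewrite (iLbr hD hE) mulrBl mulrBr !mulrA -!addrA; congr (_ + _).
    by rewrite addrA addNr add0r.
  apply: Gadd; first by apply: GmulL => //; apply: (tri_bracket Htri).
  by apply: GmulL.
- by move=> d x _ h; apply: Gmono.
Qed.

Definition beta (l : nat) : U := oapp (fun i => iL (alpha i)) 1 (insub l : option 'I_n).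
Lemma beta_ord (i : 'I_n) : beta i = iL (alpha i).
Proof. by rewrite /beta valK. Qed.
Lemma G_beta l : G 1 (beta l).
Proof.
rewrite /beta; case: insub => [i|] /=; first by apply: G_iL; apply: (tri_basis_in Htri).
by apply: Gmono; rewrite -iS1; apply: Gs.
Qed.
Definition mono (a : seq nat) : U := \prod_(0 <= l < n) beta l ^+ nth 0 a l.
Definition deg (a : seq nat) : nat := (\sum_(0 <= l < n) nth 0 a l)%N.
Lemma G_range (r : seq nat) (a : seq nat) :
  G (\sum_(l <- r) nth 0 a l)%N (\prod_(l <- r) beta l ^+ nth 0 a l).
Proof.
apply: (big_rec2 (fun d x => G d x)); first by rewrite -iS1; apply: Gs.
by move=> i y1 y2 _ h; apply: GM => //; apply: G_pow; apply: G_beta.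
Qed.
Lemma G_mono a : G (deg a) (mono a). Proof. exact: G_range. Qed.

Lemma prod_split (F : nat -> U) i : (i < n)%N ->
  \prod_(0 <= l < n) F l = \prod_(0 <= l < i) F l * (F i * \prod_(i.+1 <= l < n) F l).
Proof. by move=> hi; rewrite (big_cat_nat (leq0n i) (ltnW hi)) /= (big_ltn hi). Qed.
Lemma sum_split (F : nat -> nat) i : (i < n)%N ->
  (\sum_(0 <= l < n) F l = \sum_(0 <= l < i) F l + (F i + \sum_(i.+1 <= l < n) F l))%N.
Proof. by move=> hi; rewrite (big_cat_nat (leq0n i) (ltnW hi)) /= (big_ltn hi). Qed.

Lemma F3a i b : (i < n)%N -> G (deg b) (beta i * mono b - mono (incr_nth b i)).
Proof.
move=> hi; rewrite /mono /deg !(prod_split _ hi) (sum_split _ hi).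
set P := \prod_(0 <= l < i) _.
have eP : \prod_(0 <= l < i) beta l ^+ nth 0 (incr_nth b i) l = P.
  apply: eq_big_nat => l /andP[_ hl]; rewrite nth_incr_nth.
  by rewrite (_ : (i == l) = false) // eq_sym ltn_eqF.
set Q := \prod_(i.+1 <= l < n) _.
have eQ : \prod_(i.+1 <= l < n) beta l ^+ nth 0 (incr_nth b i) l = Q.
  apply: eq_big_nat => l /andP[hl _]; rewrite nth_incr_nth.
  by rewrite (_ : (i == l) = false) // ltn_eqF.
rewrite eP eQ nth_incr_nth eqxx add1n exprS.
have -> : beta i * (P * (beta i ^+ nth 0 b i * Q)) - P * (beta i * beta i ^+ nth 0 b i * Q)
  = (beta i * P - P * beta i) * (beta i ^+ nth 0 b i * Q).
  by rewrite mulrBl !mulrA.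
apply: GM; last first.
  by apply: GM; [apply: G_pow; apply: G_beta | apply: G_range].
have := beta_ord (Ordinal hi); rewrite /= => ->.
apply: LF; first exact: (tri_basis_in Htri).
exact: G_range.
Qed.

Lemma iL_sum_gen (c : 'I_n -> S) (r : seq 'I_n) :
  L (fun p => \sum_(i <- r) c i * alpha i p) /\
  iL (fun p => \sum_(i <- r) c i * alpha i p) = \sum_(i <- r) iS (c i) * iL (alpha i).
Proof.
elim: r => [|x r [hL hI]].
- pose i0 := Ordinal Hn.
  have -> : (fun p => \sum_(i <- [::]) c i * alpha i p) = smul_op 0 (alpha i0).
    by apply: funext => p; rewrite big_nil /smul_op mul0r.
  have hb := tri_basis_in Htri i0.
  split; first by apply: (tri_smul Htri).
  by rewrite iLsmul // iS0 mul0r big_nil.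
- have -> : (fun p => \sum_(i <- x :: r) c i * alpha i p) =
     add_op (smul_op (c x) (alpha x)) (fun p => \sum_(i <- r) c i * alpha i p).
    by apply: funext => p; rewrite big_cons.
  have hb := tri_basis_in Htri x.
  have hs : L (smul_op (c x) (alpha x)) by apply: (tri_smul Htri).
  split; first by apply: (tri_add Htri).
  by rewrite iLadd // iLsmul // hI big_cons.
Qed.
Lemma iL_decomp D : L D -> exists c : 'I_n -> S, iL D = \sum_(i < n) iS (c i) * iL (alpha i).
Proof.
move=> hD; have [c hc] := tri_span Htri hD; exists c.
by rewrite hc; have [_ ->] := iL_sum_gen c (index_enum 'I_n).
Qed.

Definition wf (d : nat) (a : seq nat) := (size a == n) && (deg a == d).
Lemma deg_incr a i : (i < n)%N -> deg (incr_nth a i) = (deg a).+1.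
Proof.
move=> hi; rewrite /deg (sum_split _ hi) (sum_split (fun l => nth 0 a l) hi) nth_incr_nth eqxx.
have e1 : (\sum_(0 <= l < i) nth 0 (incr_nth a i) l = \sum_(0 <= l < i) nth 0 a l)%N.
  apply: eq_big_nat => l /andP[_ hl]; rewrite nth_incr_nth.
  by rewrite (_ : (i == l) = false) // eq_sym ltn_eqF.
have e2 : (\sum_(i.+1 <= l < n) nth 0 (incr_nth a i) l = \sum_(i.+1 <= l < n) nth 0 a l)%N.
  apply: eq_big_nat => l /andP[hl _]; rewrite nth_incr_nth.
  by rewrite (_ : (i == l) = false) // ltn_eqF.
by rewrite e1 e2 add1n addSn addnS.
Qed.
Lemma wf_incr d a i : (i < n)%N -> wf d a -> wf d.+1 (incr_nth a i).
Proof.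
move=> hi /andP[/eqP hs /eqP hd]; apply/andP; split.
  by rewrite size_incr_nth hs hi.
by rewrite deg_incr // hd.
Qed.

Definition vl (l : seq (seq nat * S)) : U := \sum_(p <- l) iS p.2 * mono p.1.

Lemma mono0 : mono (nseq n 0%N) = 1.
Proof.
rewrite /mono big_nat_cond big1 // => l /andP[/andP[_ hl] _].
by rewrite nth_nseq hl expr0.
Qed.
Lemma deg0 : deg (nseq n 0%N) = 0%N.
Proof.
rewrite /deg big_nat_cond big1 // => l /andP[/andP[_ hl] _].
by rewrite nth_nseq hl.
Qed.

Lemma NF d x : G d x -> exists l, (forall p, p \in l -> wf d p.1) /\ Gz d (x - vl l).
Proof.
elim => {d x}.
- move=> [|d] s.
  + exists [:: (nseq n 0%N, s)]; split.
      by move=> p; rewrite inE => /eqP -> /=; rewrite /wf size_nseq deg0 !eqxx.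
    by rewrite /= /vl big_seq1 /= mono0 mulr1 subrr.
  + exists [::]; split => //=; rewrite /vl big_nil subr0; exact: Gs.
- move=> d x y _ [l1 [w1 h1]] _ [l2 [w2 h2]]; exists (l1 ++ l2); split.
    by move=> p; rewrite mem_cat => /orP[/w1|/w2].
  rewrite /vl big_cat /= opprD addrACA; exact: GzD.
- move=> d s x _ [l [w h]]; exists [seq (p.1, s * p.2) | p <- l]; split.
    by move=> p /mapP[q /w hq ->].
  have -> : iS s * x - vl [seq (p.1, s * p.2) | p <- l] = iS s * (x - vl l).
    rewrite /vl big_map mulrBr mulr_sumr; congr (_ - _); apply: eq_bigr => p _.
    by rewrite /= iSM mulrA.
  exact: GzS.
- move=> d D x hD _ [l [w h]].
  have [c hc] := iL_decomp hD.
  exists [seq (incr_nth p.1 i, c i * p.2) | i : 'I_n <- index_enum 'I_n, p : seq nat * S <- l]; split.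
    move=> p /allpairsP [[i q] [_ hq ->]] /=.
    by apply: wf_incr => //; apply: w.
  have -> : iL D * x - vl [seq (incr_nth p.1 i, c i * p.2) | i : 'I_n <- index_enum 'I_n, p : seq nat * S <- l] =
     iL D * (x - vl l) + \sum_(i <- index_enum 'I_n) \sum_(p <- l)
        (iS (c i) * iL (alpha i) * (iS p.2 * mono p.1) - iS (c i * p.2) * mono (incr_nth p.1 i)).
    set A := fun (i : 'I_n) (p : seq nat * S) => iS (c i) * iL (alpha i) * (iS p.2 * mono p.1).
    set B := fun (i : 'I_n) (p : seq nat * S) => iS (c i * p.2) * mono (incr_nth p.1 i).
    have eA : \sum_(i <- index_enum 'I_n) \sum_(p <- l) A i p = iL D * vl l.
      by rewrite hc mulr_suml /vl; apply: eq_bigr => i _; rewrite mulr_sumr.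
    have eB : \sum_(i <- index_enum 'I_n) \sum_(p <- l) B i p =
       vl [seq (incr_nth p.1 i, c i * p.2) | i : 'I_n <- index_enum 'I_n, p : seq nat * S <- l].
      by rewrite /vl big_allpairs_dep.
    have eS : \sum_(i <- index_enum 'I_n) \sum_(p <- l) (A i p - B i p) =
       \sum_(i <- index_enum 'I_n) \sum_(p <- l) A i p - \sum_(i <- index_enum 'I_n) \sum_(p <- l) B i p.
      by rewrite -sumrB; apply: eq_bigr => i _; rewrite sumrB.
    by rewrite eS eA eB mulrBr addrA subrK.
  apply: Gadd; first exact: GzLS.
  apply: G_sum => i _; rewrite big_seq; apply: G_sum => p hp.
  have [/eqP hs /eqP hdeg] := andP (w p hp).
  have hb := tri_basis_in Htri i.
  have e' : iL (alpha i) * iS p.2 = iS p.2 * iL (alpha i) + iS (alpha i p.2).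
    by rewrite -(iLcomm p.2 hb) addrC subrK.
  have -> : iS (c i) * iL (alpha i) * (iS p.2 * mono p.1) - iS (c i * p.2) * mono (incr_nth p.1 i)
     = iS (c i * p.2) * (beta i * mono p.1 - mono (incr_nth p.1 i)) + iS (c i * alpha i p.2) * mono p.1.
    rewrite beta_ord mulrA -(mulrA (iS (c i))) e' mulrDr mulrDl !iSM !mulrA mulrBr.
    by rewrite !mulrA addrAC.
  apply: Gadd; apply: GmulS; last by rewrite -hdeg; apply: G_mono.
  by rewrite -hdeg; apply: F3a.
- move=> d x hx _; exists [::]; split => //=.
  by rewrite /vl big_nil subr0.
Qed.

Definition coef (l : seq (seq nat * S)) (a : seq nat) : S := \sum_(p <- l | p.1 == a) p.2.
Lemma vl_merge l : vl l = \sum_(a <- undup (map fst l)) iS (coef l a) * mono a.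
Proof.
rewrite /coef.
transitivity (\sum_(a <- undup (map fst l)) \sum_(p <- l) (if p.1 == a then iS p.2 * mono p.1 else 0)); last first.
  apply: eq_big => // a _; rewrite iS_sum mulr_suml [RHS]big_mkcond; apply: eq_big => // p _.
  by case: eqP => [->|_].
rewrite exchange_big /vl big_seq [RHS]big_seq; apply: eq_bigr => p hp.
rewrite -big_mkcond (eq_bigl (pred1 p.1)); last by move=> a; rewrite /= eq_sym.
rewrite -big_filter filter_pred1_uniq ?undup_uniq ?big_seq1 //.
by rewrite mem_undup; apply: map_f.
Qed.
Lemma coef_notin l a : a \notin map fst l -> coef l a = 0.
Proof.
move=> ha; rewrite /coef big_seq_cond big1 // => p /andP[hp /eqP e].
by move: ha; rewrite -e (map_f fst hp).
Qed.

Lemma ad_pow0 t x e : ad t x = 0 -> ad t (x ^+ e) = 0.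
Proof.
move=> h; elim: e => [|e IH]; first by rewrite expr0 -iS1 ad_iS.
by rewrite exprS adM h IH mul0r mulr0 addr0.
Qed.

Section Pow.
Variable j : 'I_n.
Local Notation t := ('X_j : S).
Local Notation f := (alpha j 'X_j).
Local Notation bj := (iL (alpha j)).
Lemma adC m z : G m z -> iter m.+1 (ad t) (bj * z) = iS (m.+1%:R * f) * iter m (ad t) z.
Proof.
have hb := tri_basis_in Htri j.
elim: m z => [|m IH] z hz.
  have hz0 : ad t z = 0 by have := ad_lower t hz.
  by rewrite /= adM (ad_L _ hb) hz0 mulr0 addr0 mul1r.
rewrite iterSr adM (ad_L _ hb) iter_adD iter_mulS (IH _ (ad_lower t hz)) -iterSr.
rewrite -mulrDl -iSD; congr (iS _ * _).
by rewrite -[in RHS]natr1 mulrDl mul1r addrC.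
Qed.
Lemma adPow m : iter m (ad t) (bj ^+ m) = iS (m`!%:R * f ^+ m).
Proof.
elim: m => [|m IH]; first by rewrite expr0 /= fact0 mul1r expr0 iS1.
rewrite exprS adC; last by apply: G_pow; apply: G_iL; apply: (tri_basis_in Htri).
by rewrite IH -iSM factS natrM exprS mulrACA.
Qed.
End Pow.

Lemma wf0 a : wf 0 a -> a = nseq n 0%N.
Proof.
move=> /andP[/eqP hs /eqP hd]; apply: (@eq_from_nth _ 0%N); first by rewrite size_nseq.
move=> i; rewrite hs => hi; rewrite nth_nseq hi.
move: hd; rewrite /deg => /eqP; rewrite sum_nat_seq_eq0 => /allP /(_ i).
by rewrite mem_index_iota hi => /(_ isT) /eqP.
Qed.
Lemma nth_le_deg a j : (j < n)%N -> (nth 0 a j <= deg a)%N.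
Proof. by move=> hj; rewrite /deg (sum_split _ hj); apply: leq_trans (leq_addr _ _) (leq_addl _ _). Qed.
Lemma deg_set0 a j : (j < n)%N -> deg (set_nth 0%N a j 0%N) = (deg a - nth 0 a j)%N.
Proof.
move=> hj; rewrite /deg (sum_split _ hj) (sum_split (fun l => nth 0 a l) hj) nth_set_nth /= eqxx.
have e1 : (\sum_(0 <= l < j) nth 0 (set_nth 0%N a j 0%N) l = \sum_(0 <= l < j) nth 0 a l)%N.
  apply: eq_big_nat => l /andP[_ hl]; rewrite nth_set_nth /=.
  by rewrite (_ : (l == j) = false) // ltn_eqF.
have e2 : (\sum_(j.+1 <= l < n) nth 0 (set_nth 0%N a j 0%N) l = \sum_(j.+1 <= l < n) nth 0 a l)%N.
  apply: eq_big_nat => l /andP[hl _]; rewrite nth_set_nth /=.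
  by rewrite (_ : (l == j) = false) // eq_sym ltn_eqF.
by rewrite e1 e2 add0n addnCA addKn.
Qed.
Lemma set_inj a b j : size a = size b -> (j < size a)%N -> nth 0 a j = nth 0 b j ->
  set_nth 0%N a j 0%N = set_nth 0%N b j 0%N -> a = b.
Proof.
move=> hs hj hn he; apply: (@eq_from_nth _ 0%N) => // i hi.
case: (eqVneq i j) => [->//|hij].
by have := congr1 (fun x => nth 0 x i) he; rewrite /= !nth_set_nth /= (negPf hij).
Qed.
Definition Ypart (a : seq nat) (j : nat) : U := \prod_(j.+1 <= l < n) beta l ^+ nth 0 a l.
Lemma prefix1 a j : (forall i, (i < j)%N -> nth 0 a i = 0%N) ->
  \prod_(0 <= l < j) beta l ^+ nth 0 a l = 1.
Proof.
move=> h; rewrite big_nat_cond big1 // => l /andP[/andP[_ hl] _].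
by rewrite h // expr0.
Qed.
Lemma mono_split a j : (j < n)%N -> (forall i, (i < j)%N -> nth 0 a i = 0%N) ->
  mono a = beta j ^+ nth 0 a j * Ypart a j.
Proof. by move=> hj h; rewrite /mono (prod_split _ hj) prefix1 // mul1r. Qed.
Lemma mono_set0 a j : (j < n)%N -> (forall i, (i < j)%N -> nth 0 a i = 0%N) ->
  mono (set_nth 0%N a j 0%N) = Ypart a j.
Proof.
move=> hj h; rewrite /mono (prod_split _ hj) prefix1; last first.
  by move=> i hi; rewrite nth_set_nth /= (_ : (i == j) = false) ?h // ltn_eqF.
rewrite nth_set_nth /= eqxx expr0 !mul1r /Ypart; apply: eq_big_nat => l /andP[hl _].
by rewrite nth_set_nth /= (_ : (l == j) = false) // eq_sym ltn_eqF.
Qed.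
Lemma adY a j (hj : (j < n)%N) : ad 'X_(Ordinal hj) (Ypart a j) = 0.
Proof.
rewrite /Ypart big_nat_cond; apply: (big_ind (fun x => ad _ x = 0)).
- by rewrite -iS1 ad_iS.
- by move=> x y hx hy; rewrite adM hx hy mul0r mulr0 addr0.
move=> l /andP[/andP[hl1 hl2] _]; apply: ad_pow0.
have := beta_ord (Ordinal hl2); rewrite /= => ->.
rewrite ad_L; last exact: (tri_basis_in Htri).
by rewrite (tri_triang Htri) ?iS0.
Qed.
Lemma K_neq0 (j : 'I_n) m : (m`!%:R * alpha j 'X_j ^+ m : S) != 0.
Proof.
apply: mulf_neq0.
  rewrite -mpolyC_nat mpolyC_eq0 ((pcharf0P k).1 Hchar).
  by rewrite -lt0n fact_gt0.
apply: expf_neq0; have /prodf_neq0 h := tri_nonzero Htri; exact: h.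
Qed.

Lemma elim_main D : forall l, (forall p, p \in l -> wf D p.1) ->
  (forall j : 'I_n, Gz D.-1 (ad 'X_j (vl l))) -> (D = 0%N -> vl l = 0) ->
  forall a, coef l a = 0.
Proof.
elim/ltn_ind: D => D IH l wl hj h0.
set s := undup (map fst l).
have us : uniq s := undup_uniq _.
have ws : forall a, a \in s -> wf D a.
  move=> a; rewrite mem_undup => /mapP [p hp ->]; exact: wl.
have hv := vl_merge l; rewrite -/s in hv.
suff hs : forall a, a \in s -> coef l a = 0.
  move=> a; case: (boolP (a \in s)) => [/hs //|ha]; apply: coef_notin; by rewrite -mem_undup.
case: D IH wl ws hj h0 => [|D'] IH wl ws hj h0.
  move=> a ha; have ea := wf0 (ws a ha).
  have es : s = [:: a].
    rewrite -(filter_pred1_uniq us ha); apply/esym/all_filterP/allP => b hb /=.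
    by rewrite (wf0 (ws b hb)) ea.
  have := h0 erefl; rewrite hv es big_seq1 ea mono0 mulr1 -iS0 => /iS_inj.
  by rewrite -ea.
have main : forall j, (j <= n)%N -> forall a, a \in s -> coef l a != 0 ->
    forall i, (i < j)%N -> nth 0 a i = 0%N.
  elim=> [|j IHj] hjn a ha hca i hi //.
  have hjlt : (j < n)%N := hjn.
  have prev := IHj (ltnW hjn).
  rewrite ltnS leq_eqVlt in hi; case/orP: hi => [/eqP ->|hi]; last exact: prev.
  suff Q0 : forall a, a \in s -> coef l a != 0 -> (nth 0 a j <= 0)%N.
    by apply/eqP; rewrite -leqn0; apply: Q0.
  have Qtop : forall a, a \in s -> coef l a != 0 -> (nth 0 a j <= D'.+1)%N.
    move=> b hb _; have /andP[_ /eqP <-] := ws b hb; exact: nth_le_deg.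
  suff step : forall m, (forall a, a \in s -> coef l a != 0 -> (nth 0 a j <= m.+1)%N) ->
                        (forall a, a \in s -> coef l a != 0 -> (nth 0 a j <= m)%N).
    have gen : forall m, (forall a, a \in s -> coef l a != 0 -> (nth 0 a j <= m)%N) ->
                         (forall a, a \in s -> coef l a != 0 -> (nth 0 a j <= 0)%N).
      by elim=> // m IHm /step.
    exact: gen Qtop.
  move=> m Qm b hb hcb; rewrite leqNgt; apply/negP => hgt.
  have hbj : nth 0 b j = m.+1 by apply/eqP; rewrite eqn_leq Qm.
  pose jo := Ordinal hjlt.
  pose K : S := (m.+1)`!%:R * alpha jo 'X_jo ^+ m.+1.
  pose l' := [seq (set_nth 0%N a j 0%N, coef l a * K) | a <- s & nth 0 a j == m.+1].
  have key : iter m.+1 (ad 'X_jo) (vl l) = vl l'.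
    rewrite hv iter_ad_sum /vl /l' big_map big_filter [RHS]big_mkcond.
    rewrite big_seq [RHS]big_seq; apply: eq_bigr => a' ha'.
    rewrite iter_mulS.
    case: (eqVneq (coef l a') 0) => [->|hca'].
      by rewrite iS0 !mul0r iS0 mul0r if_same.
    have pa := prev a' ha' hca'.
    rewrite (mono_split hjlt pa) iter_adz; last exact: adY.
    case: eqP => [e|ne].
      have := adPow jo m.+1; rewrite -(beta_ord jo) /= => hP.
      by rewrite e hP mono_set0 // mulrA -iSM.
    have hlt : (nth 0 a' j < m.+1)%N by rewrite ltn_neqAle Qm // andbT; apply/eqP.
    by rewrite (iter_kill _ hlt (G_pow _ (G_beta j))) mul0r mulr0.
  have hlt : (D'.+1 - m.+1 < D'.+1)%N by rewrite subSS ltnS leq_subr.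
  have wl' : forall p, p \in l' -> wf (D'.+1 - m.+1) p.1.
    move=> p /mapP [a1]; rewrite mem_filter => /andP[/eqP haj ha1] -> /=.
    have /andP[/eqP hsz /eqP hdg] := ws a1 ha1.
    apply/andP; split.
      by rewrite size_set_nth hsz; apply/eqP/maxn_idPr.
    by rewrite deg_set0 // hdg haj.
  have hj' : forall j' : 'I_n, Gz (D'.+1 - m.+1).-1 (ad 'X_j' (vl l')).
    move=> j'; rewrite -key iter_comm; have := Gz_iter 'X_jo m.+1 (hj j').
    by rewrite subSS /= subnS.
  have h0' : (D'.+1 - m.+1)%N = 0%N -> vl l' = 0.
    rewrite subSS => hz; rewrite -key iterSr.
    by have := Gz_iter 'X_jo m (hj jo); rewrite /= hz.
  have coefl' : coef l' (set_nth 0%N b j 0%N) = coef l b * K.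
    rewrite /coef /l' big_map big_filter_cond /=.
    rewrite -big_filter (@eq_in_filter _ _ (pred1 b)) ?filter_pred1_uniq ?big_seq1 //.
    move=> a1 ha1 /=; apply/andP/eqP => [[/eqP haj /eqP he]|->]; last by rewrite hbj eqxx.
    have /andP[/eqP hsa _] := ws a1 ha1; have /andP[/eqP hsb _] := ws b hb.
    by apply: set_inj he; [rewrite hsa hsb | rewrite hsa | rewrite haj hbj].
  have := IH _ hlt l' wl' hj' h0' (set_nth 0%N b j 0%N).
  rewrite coefl' => /eqP; rewrite mulf_eq0 (negPf hcb) /=.
  by rewrite (negPf (K_neq0 jo m.+1)).
move=> a ha; apply/eqP; apply: contraT => hca.
have z := main n (leqnn n) a ha hca.
have /andP[_ /eqP hdg] := ws a ha.
suff : deg a = 0%N by rewrite hdg.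
by rewrite /deg big_nat_cond big1 // => i /andP[/andP[_ hi] _]; apply: z.
Qed.

Lemma centralizer u : (forall s, u * iS s - iS s * u = 0) -> exists s, u = iS s.
Proof.
move=> hu; have [d hd] := spanning u.
elim: d u hu hd => [|d IHd] u hu hd; first exact: G0_iS.
have [l [wl hl]] := NF hd.
have hj : forall j : 'I_n, Gz d.+1.-1 (ad 'X_j (vl l)).
  move=> j; have -> : vl l = u - (u - vl l) by rewrite opprB addrC subrK.
  rewrite adB (_ : ad 'X_j u = 0) ?sub0r; last exact: hu.
  by apply: GzN; apply: ad_lower.
have h0 : d.+1 = 0%N -> vl l = 0 by [].
have hz := elim_main wl hj h0.
have hv : vl l = 0.
  by rewrite vl_merge big1 // => a _; rewrite hz iS0 mul0r.
apply: IHd => //; move: hl; by rewrite hv subr0.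
Qed.

End Main.

Theorem proposition3p3 (k : fieldType) (n : nat)
  (Hchar : [pchar k] =i pred0) (Hn : (0 < n)%N)
  (L : ({mpoly k[n]} -> {mpoly k[n]}) -> Prop)
  (alpha : 'I_n -> ({mpoly k[n]} -> {mpoly k[n]}))
  (Htri : triangularizable L alpha)
  (U : algType k) (iS : {mpoly k[n]} -> U) (iL : ({mpoly k[n]} -> {mpoly k[n]}) -> U)
  (HU : is_enveloping_algebra L iS iL) :
  injective iS /\
  (forall u : U, (forall s : {mpoly k[n]}, u * iS s - iS s * u = 0) <->
                 exists s : {mpoly k[n]}, u = iS s).
Proof.
split; first exact: (iS_inj Htri HU).
move=> u; split; first exact: (centralizer Htri Hn Hchar HU).
move=> [s ->] t; by rewrite -!(iSM HU) mulrC subrr.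
Qed.
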